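(* Let $\Omega\subseteq\mathbb{R}^n$ be open, let $f,g\in\mathbb{A}(\Omega)$ be D-continuous, and let $D$ be a dense subset of $\Omega$. Then: (a) if $f(x)\le g(x)$ for all $x\in D$, then $f(x)\le g(x)$ for all $x\in\Omega$; (b) if $f(x)=g(x)$ for all $x\in D$, then $f(x)=g(x)$ for all $x\in\Omega$; (c) if $f(x)\subseteq g(x)$ for all $x\in D$, then $f(x)\subseteq g(x)$ for all $x\in\Omega$.
   Context: $\overline{\mathbb{R}}=\mathbb{R}\cup\{\pm\infty\}$, $\mathbb{I}\overline{\mathbb{R}}$ is the set of closed intervals $[\underline a,\overline a]$ with $\underline a\le\overline a$ in $\overline{\mathbb{R}}$, $a\in\overline{\mathbb{R}}$ identified with $[a,a]$. $\mathbb{A}(X)$ is the set of functions $X\to\mathbb{I}\overline{\mathbb{R}}$. Order: $[\underline a,\overline a]\le[\underline b,\overline b]$ iff $\underline a\le\underline b$ and $\overline a\le\overline b$. $B_\delta(x)=\{y\in\Omega:\|x-y\|<\delta\}$. For dense $D\subseteq\Omega$ and $f\in\mathbb{A}(D)$: $I(D,\Omega,f)(x)=\sup_{\delta>0}\inf\{z\in f(y):y\in B_\delta(x)\cap D\}$, $S(D,\Omega,f)(x)=\inf_{\delta>0}\sup\{z\in f(y):y\in B_\delta(x)\cap D\}$, $F(D,\Omega,f)(x)=[I(D,\Omega,f)(x),S(D,\Omega,f)(x)]$. $f\in\mathbb{A}(\Omega)$ is D-continuous if $F(D,\Omega,f)=f$ for every dense subset $D$ of $\Omega$ (using the restriction of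 $f$ to $D$). *)

(* Defs.v *)
From HB Require Import structures.
From mathcomp Require Import all_boot all_order all_algebra.
From mathcomp Require Import all_classical all_reals.
From mathcomp Require Import ereal.
Set Implicit Arguments. Unset Strict Implicit. Unset Printing Implicit Defensive.
Import Order.TTheory GRing.Theory Num.Theory.
Local Open Scope classical_set_scope.
Local Open Scope ring_scope.

Definition enorm (R : realType) (n : nat) (x : 'rV[R]_n) : R :=
  Num.sqrt (\sum_(i < n) x ord0 i ^+ 2).

Definition Ball (R : realType) (n : nat) (Omega : set 'rV[R]_n)
  (x : 'rV[R]_n) (d : R) : set 'rV[R]_n :=
  [set y | Omega y /\ enorm (x - y) < d].

Definition is_open (R : realType) (n : nat) (Omega : set 'rV[R]_n) : Prop :=
  forall x, Omega x -> exists2 d : R, 0 < d &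
    forall y, enorm (x - y) < d -> Omega y.

Definition dense_in (R : realType) (n : nat) (D Omega : set 'rV[R]_n) : Prop :=
  D `<=` Omega /\
  forall x, Omega x -> forall d : R, 0 < d -> exists y, D y /\ enorm (x - y) < d.

Record itv (R : realType) := Itv {
  ilo : \bar R ;
  ihi : \bar R ;
  ilo_le_ihi : (ilo <= ihi)%E }.

Definition itv_set (R : realType) (a : itv R) : set (\bar R) :=
  [set z | (ilo a <= z)%E /\ (z <= ihi a)%E].

Definition itv_le (R : realType) (a b : itv R) : Prop :=
  (ilo a <= ilo b)%E /\ (ihi a <= ihi b)%E.

(* interval-valued functions are total functions R^n -> itv R; only their
   values on the relevant domain matter. *)

Definition Ilow (R : realType) (n : nat) (D Omega : set 'rV[R]_n)
  (f : 'rV[R]_n -> itv R) (x : 'rV[R]_n) : \bar R :=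
  ereal_sup [set ereal_inf [set z | exists2 y, (Ball Omega x d `&` D) y
                                             & itv_set (f y) z]
            | d in [set d : R | 0 < d]].

Definition Supp (R : realType) (n : nat) (D Omega : set 'rV[R]_n)
  (f : 'rV[R]_n -> itv R) (x : 'rV[R]_n) : \bar R :=
  ereal_inf [set ereal_sup [set z | exists2 y, (Ball Omega x d `&` D) y
                                             & itv_set (f y) z]
            | d in [set d : R | 0 < d]].

(* f is D-continuous on Omega: F(D,Omega,f) = f on Omega for every dense D,
   i.e. [I(D,Omega,f)(x), S(D,Omega,f)(x)] = f(x) for all x in Omega. *)
Definition D_continuous (R : realType) (n : nat) (Omega : set 'rV[R]_n)
  (f : 'rV[R]_n -> itv R) : Prop :=
  forall D : set 'rV[R]_n, dense_in D Omega ->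
    forall x, Omega x -> Ilow D Omega f x = ilo (f x) /\ Supp D Omega f x = ihi (f x).

(* Main.v *)
Require Import Defs.
From HB Require Import structures.
From mathcomp Require Import all_boot all_order all_algebra.
From mathcomp Require Import all_classical all_reals.
From mathcomp Require Import ereal.
Import Order.TTheory.
Local Open Scope classical_set_scope.
Local Open Scope ereal_scope.

Lemma Ilow_mono (R : realType) (n : nat) (Omega D : set 'rV[R]_n)
  (f g : 'rV[R]_n -> itv R) x :
  (forall y, D y -> ilo (f y) <= ilo (g y)) ->
  Ilow D Omega f x <= Ilow D Omega g x.
Proof.
move=> H; apply: ge_ereal_sup => _ [d d0 <-].
apply: (@le_trans _ _ (ereal_inf [set z | exists2 y, (Ball Omega x d `&` D) y
                                             & itv_set (g y) z])); last first.
  by apply: ereal_sup_ubound; exists d.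
apply: le_ereal_inf_tmp => z [y Hy [Hz1 Hz2]].
apply: (@le_trans _ _ (ilo (f y))).
  apply: ereal_inf_lbound; exists y => //; split => //; exact: ilo_le_ihi.
apply: le_trans Hz1; apply: H; exact: Hy.2.
Qed.

Lemma Supp_mono (R : realType) (n : nat) (Omega D : set 'rV[R]_n)
  (f g : 'rV[R]_n -> itv R) x :
  (forall y, D y -> ihi (f y) <= ihi (g y)) ->
  Supp D Omega f x <= Supp D Omega g x.
Proof.
move=> H; apply: le_ereal_inf_tmp => _ [d d0 <-].
apply: (@le_trans _ _ (ereal_sup [set z | exists2 y, (Ball Omega x d `&` D) y
                                             & itv_set (f y) z])).
  by apply: ereal_inf_lbound; exists d.
apply: ge_ereal_sup => z [y Hy [Hz1 Hz2]].
apply: (@le_trans _ _ (ihi (g y))); last first.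
  apply: ereal_sup_ubound; exists y => //; split => //; exact: ilo_le_ihi.
apply: le_trans Hz2 _; apply: H; exact: Hy.2.
Qed.

Lemma part_a (R : realType) (n : nat) (Omega D : set 'rV[R]_n)
  (f g : 'rV[R]_n -> itv R) :
  D_continuous Omega f -> D_continuous Omega g ->
  dense_in D Omega ->
  (forall x, D x -> itv_le (f x) (g x)) ->
      forall x, Omega x -> itv_le (f x) (g x).
Proof.
move=> cf cg dD H x Ox.
have [If Sf] := cf D dD x Ox; have [Ig Sg] := cg D dD x Ox.
split.
  rewrite -If -Ig; apply: Ilow_mono => y Dy; exact: (H y Dy).1.
rewrite -Sf -Sg; apply: Supp_mono => y Dy; exact: (H y Dy).2.
Qed.

Theorem theorem14 (R : realType) (n : nat) (Omega D : set 'rV[R]_n)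
  (f g : 'rV[R]_n -> itv R) :
  is_open Omega -> D_continuous Omega f -> D_continuous Omega g ->
  dense_in D Omega ->
  ((forall x, D x -> itv_le (f x) (g x)) ->
      forall x, Omega x -> itv_le (f x) (g x)) /\
  ((forall x, D x -> f x = g x) ->
      forall x, Omega x -> f x = g x) /\
  ((forall x, D x -> itv_set (f x) `<=` itv_set (g x)) ->
      forall x, Omega x -> itv_set (f x) `<=` itv_set (g x)).
Proof.
move=> _ cf cg dD; split; first exact: part_a.
split.
  move=> H x Ox.
  have [l1 h1] := @part_a R n Omega D f g cf cg dD (fun y Dy => ltac:(rewrite (H y Dy); split => //)) x Ox.
  have [l2 h2] := @part_a R n Omega D g f cg cf dD (fun y Dy => ltac:(rewrite (H y Dy); split => //)) x Ox.
  move: l1 h1 l2 h2; case: (f x) => a b p; case: (g x) => c d q /= l1 h1 l2 h2.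
  have ac : a = c by apply/eqP; rewrite eq_le l1 l2.
  have bd : b = d by apply/eqP; rewrite eq_le h1 h2.
  subst c d; congr Itv; exact: eq_irrelevance.
move=> H x Ox.
have [If Sf] := cf D dD x Ox; have [Ig Sg] := cg D dD x Ox.
have L : ilo (g x) <= ilo (f x).
  rewrite -If -Ig; apply: Ilow_mono => y Dy.
  have [] := H y Dy (ilo (f y)) => //; split => //; exact: ilo_le_ihi.
have U : ihi (f x) <= ihi (g x).
  rewrite -Sf -Sg; apply: Supp_mono => y Dy.
  have [] := H y Dy (ihi (f y)) => //; split => //; exact: ilo_le_ihi.
move=> z [z1 z2]; split; [exact: le_trans L z1 | exact: le_trans z2 U].
Qed.
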